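(* Let $n\ge1$ and let $\bar F:\mathbb{R}^n\to[0,\infty)$ be a Finsler norm. Write $\|\vec v\|=\bar F(\vec v)$ and $\bar g_{\vec v}(\vec v,\vec w)=\frac12\frac{\partial^2\bar F^2}{\partial v^\alpha\partial v^\beta}(\vec v)\,v^\alpha w^\beta$ for $\vec v\ne0$, with $\bar g_{\vec 0}(\vec 0,\vec w):=0$. Then for all $v^0,w^0>0$ and all $\vec v,\vec w\in\mathbb{R}^n$ with $(v^0)^2-\|\vec v\|^2>0$ and $(w^0)^2-\|\vec w\|^2>0$, $$\big[v^0w^0-\bar g_{\vec v}(\vec v,\vec w)\big]^2-\big[(v^0)^2-\|\vec v\|^2\big]\big[(w^0)^2-\|\vec w\|^2\big]\ge0.$$
   Context: A Finsler norm on $\mathbb{R}^n$ is a function $\bar F:\mathbb{R}^n\to[0,\infty)$ that is smooth on $\mathbb{R}^n\setminus\{0\}$, continuous at $0$, positively homogeneous of degree 1 ($\bar F(\lambda x)=\lambda\bar F(x)$ for $\lambda>0$), and such that for every $x\neq0$ the matrix $\frac12\frac{\partial^2\bar F^2}{\partial x^\alpha\partial x^\beta}(x)$ is positive definite. Greek indices run over $1,\dots,n$, with summation over repeated indices. *)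

(* Defs.v *)
From HB Require Import structures.
From mathcomp Require Import all_boot all_order all_algebra.
From mathcomp Require Import all_classical all_reals all_analysis.
Set Implicit Arguments. Unset Strict Implicit. Unset Printing Implicit Defensive.
Import Order.TTheory GRing.Theory Num.Theory numFieldNormedType.Exports.
Local Open Scope classical_set_scope.
Local Open Scope ring_scope.

Section Finsler.
Variables (R : realType) (n : nat).

Definition ebasis (a : 'I_n) : 'rV[R]_n := delta_mx 0 a.

Definition partial (a : 'I_n) (f : 'rV[R]_n -> R) : 'rV[R]_n -> R :=
  fun x => derive f x (ebasis a).

Definition iter_partial (l : seq 'I_n) (f : 'rV[R]_n -> R) : 'rV[R]_n -> R :=
  foldr partial f l.

Definition smooth_on (U : set 'rV[R]_n) (f : 'rV[R]_n -> R) : Prop :=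
  open U /\
  forall l : seq 'I_n,
    {in U, continuous (iter_partial l f)} /\
    (forall a x, U x -> derivable (iter_partial l f) x (ebasis a)).

Definition sqF (F : 'rV[R]_n -> R) : 'rV[R]_n -> R := fun x => F x ^+ 2.

Definition fund_tensor (F : 'rV[R]_n -> R) (x : 'rV[R]_n) (a b : 'I_n) : R :=
  2^-1 * partial b (partial a (sqF F)) x.

Definition finsler_norm (F : 'rV[R]_n -> R) : Prop :=
  (forall x, 0 <= F x) /\
  smooth_on [set x | x != 0] F /\
  {for 0, continuous F} /\
  (forall (l : R) x, 0 < l -> F (l *: x) = l * F x) /\
  (forall x, x != 0 -> forall y : 'rV[R]_n, y != 0 ->
     0 < \sum_(a < n) \sum_(b < n) fund_tensor F x a b * y 0 a * y 0 b).

Definition gbar (F : 'rV[R]_n -> R) (v w : 'rV[R]_n) : R :=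
  if v == 0 then 0
  else \sum_(a < n) \sum_(b < n) fund_tensor F v a b * v 0 a * w 0 b.

End Finsler.

(* Main.v *)
Require Import Defs.
From HB Require Import structures.
From mathcomp Require Import all_boot all_order all_algebra.
From mathcomp Require Import all_classical all_reals all_analysis.
From mathcomp Require Import ring lra.
Import Order.TTheory GRing.Theory Num.Theory numFieldNormedType.Exports.
Local Open Scope ring_scope.

Section Aux.
Variables (R : realType) (n : nat).
Local Open Scope classical_set_scope.
Local Open Scope ring_scope.

Lemma line_is_derive (f : 'rV[R]_n -> R) (y d : 'rV[R]_n) (s : R) :
  derivable f (y + s *: d) d ->
  is_derive s 1 (fun t : R => f (y + t *: d)) ('D_d f (y + s *: d)).
Proof.
have E : (fun h : R => h^-1 *: (((fun t : R => f (y + t *: d)) \o shift s) (h *: 1)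
           - f (y + s *: d))) =
         (fun h : R => h^-1 *: ((f \o shift (y + s *: d)) (h *: d) - f (y + s *: d))).
  apply/funext => h /=; congr (_ *: (f _ - _)).
  by rewrite [h *: 1]mulr1 scalerDl addrCA.
move=> hd; split; first by rewrite /derivable E.
by rewrite /derive E.
Qed.

Lemma mvt_bound (phi : R -> R) (a b c eps : R) : a <= b ->
  (forall s, a <= s <= b -> derivable phi s 1 /\ `|'D_1 phi s - c| <= eps) ->
  `|phi b - phi a - (b - a) * c| <= eps * (b - a).
Proof.
move=> ab H.
pose psi := fun s => phi s - s * c.
have dpsi : forall s, a <= s <= b -> is_derive s 1 psi ('D_1 phi s - c).
  move=> s /H [ds _].
  have h1 : is_derive s 1 phi ('D_1 phi s) by apply: derivableP.
  have h2 : is_derive s (1:R) (fun s : R => s * c) c.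
    have -> : (fun s : R => s * c) = c \o* id by [].
    apply: DeriveDef; first by apply: derivableM; [exact: derivable_id| exact: derivable_cst].
    by rewrite deriveMr ?derive_id ?mulr1 //; exact: derivable_id.
  exact: is_deriveB.
have cont : {within `[a, b], continuous psi}.
  apply: derivable_within_continuous => s; rewrite in_itv /= => hs.
  by case: (dpsi s hs).
have [xi hxi E] : exists2 xi, xi \in `[a, b] & psi b - psi a = ('D_1 phi xi - c) * (b - a).
  apply: MVT_segment ab _ cont => s; rewrite in_itv /= => /andP[h1 h2].
  by apply: dpsi; rewrite !ltW.
move: hxi; rewrite in_itv /= => /H [_ hb].
have -> : phi b - phi a - (b - a) * c = psi b - psi a by rewrite /psi; ring.
rewrite E normrM (ger0_norm (_ : 0 <= b - a)) ?subr_ge0 //.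
by rewrite ler_wpM2r // subr_ge0.
Qed.

Lemma seg_bound (f : 'rV[R]_n -> R) (y d : 'rV[R]_n) (h c eps : R) :
  (forall s, `|s| <= `|h| ->
     derivable f (y + s *: d) d /\ `|'D_d f (y + s *: d) - c| <= eps) ->
  `|f (y + h *: d) - f y - h * c| <= eps * `|h|.
Proof.
move=> H.
pose phi : R -> R := fun t : R => f (y + t *: d).
have Hp : forall s : R, `|s| <= `|h| -> derivable phi s 1 /\ `|'D_1 phi s - c| <= eps.
  move=> s hs; have [d1 d2] := H s hs; have [ld1 ld2] := @line_is_derive f y d s d1.
  by split => //; rewrite ld2.
case: (leP 0 h) => h0.
- have := @mvt_bound phi 0 h c eps h0.
  rewrite /phi /= scale0r addr0 subr0 (ger0_norm h0); apply.
  move=> s /andP[s0 sh]; apply: Hp; rewrite !ger0_norm //; exact: le_trans s0 sh.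
- have := @mvt_bound phi h 0 c eps (ltW h0).
  rewrite /phi /= scale0r addr0 sub0r (ltr0_norm h0).
  have -> : f y - f (y + h *: d) - - h * c = - (f (y + h *: d) - f y - h * c) by ring.
  rewrite normrN; apply.
  move=> s /andP[hs s0]; apply: Hp; rewrite (ler0_norm s0) (ltr0_norm h0).
  by rewrite lerN2.
Qed.

Lemma entry_le_norm (u : 'rV[R]_n) j : `|u 0 j| <= `|u|.
Proof.
rewrite [leRHS]/Num.Def.normr /= mx_normrE.
by apply/bigmax_geP; right => /=; exists (0, j).
Qed.

Lemma norm_le_entries (u : 'rV[R]_n) c : 0 <= c -> (forall j, `|u 0 j| <= c) -> `|u| <= c.
Proof.
move=> c0 H; rewrite /Num.Def.normr /= mx_normrE (bigmax_le _ c0) //= => -[i j] _.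
by rewrite (ord1 i); exact: H.
Qed.

Lemma ebasisE (a j : 'I_n) : ebasis R a 0 j = (j == a)%:R.
Proof. by rewrite /ebasis mxE eqxx. Qed.

Definition Pk (u : 'rV[R]_n) (k : nat) : 'rV[R]_n :=
  \row_(a < n) (if (a < k)%N then u 0 a else 0).

Lemma Pk0 u : Pk u 0 = 0.
Proof. by apply/rowP => a; rewrite !mxE. Qed.

Lemma Pkn u : Pk u n = u.
Proof. by apply/rowP => a; rewrite !mxE ltn_ord. Qed.

Lemma PkS u (k : 'I_n) : Pk u k.+1 = Pk u k + u 0 k *: ebasis R k.
Proof.
apply/rowP => a; rewrite !mxE ltnS leq_eqVlt eqxx /=.
case: (eqVneq a k) => [->|ak]; first by rewrite eqxx ltnn /= mulr1 add0r.
have ak' : (nat_of_ord a == k) = false by apply/negbTE.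
by rewrite ak' /= mulr0 addr0.
Qed.

Lemma Pk_norm (u : 'rV[R]_n) (k : 'I_n) (t s : R) : `|s| <= `|t * u 0 k| ->
  `|t *: Pk u k + s *: ebasis R k| <= `|t| * `|u|.
Proof.
move=> hs; apply: norm_le_entries; first by rewrite mulr_ge0.
move=> j; rewrite !mxE eqxx /=.
case: (eqVneq j k) => [->|jk] /=.
  rewrite ltnn mulr0 add0r mulr1; apply: (le_trans hs).
  by rewrite normrM ler_wpM2l // entry_le_norm.
rewrite mulr0 addr0; case: ifP => _; last by rewrite mulr0 normr0 mulr_ge0.
by rewrite normrM ler_wpM2l // entry_le_norm.
Qed.

Lemma dir_partials (f : 'rV[R]_n -> R) (x : 'rV[R]_n) :
  (\forall z \near x, forall a, derivable f z (ebasis R a)) ->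
  (forall a, {for x, continuous (partial a f)}) ->
  forall u, derivable f x u /\ 'D_u f x = \sum_(a < n) u 0 a * partial a f x.
Proof.
move=> hd hc u.
set D := \sum_(a < n) _.
suff hq : (fun h : R => h^-1 *: ((f \o shift x) (h *: u) - f x)) @ 0^' --> D.
  split; first by apply/cvg_ex; exists D.
  by rewrite /derive; apply: cvg_lim.
apply/cvgrPdist_le => e e0.
pose S := \sum_(a < n) `|u 0 a|.
have S0 : 0 <= S by apply: sumr_ge0 => a _; exact: normr_ge0.
pose M := S + 1.
have M0 : 0 < M by rewrite /M ltr_wpDl.
pose e' := e / M.
have e'0 : 0 < e' by rewrite divr_gt0.
have hc' : \forall z \near x, forall a, `|partial a f x - partial a f z| <= e'.
  apply: (@filter_forall _ _ (fun a z => `|partial a f x - partial a f z| <= e') (nbhs x) _) => a.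
  exact: (cvgrPdist_le _ _).1 (hc a) e' e'0.
have [del del0 hball] := (nbhs_ballP _ _).1 ((near_andP _ _ _).2 (conj hd hc')).
near=> t.
have t0 : t != 0 by near: t; exact: nbhs_dnbhs_neq.
have tlt : `|t| < del / (`|u| + 1).
  by near: t; apply: dnbhs0_lt; rewrite divr_gt0 // ltr_wpDl.
pose g k := f (x + t *: Pk u k).
have gn : g n = f (t *: u + x) by rewrite /g Pkn addrC.
have g0 : g 0%N = f x by rewrite /g Pk0 scaler0 addr0.
have tel : \sum_(k < n) (g k.+1 - g k) = g n - g 0%N.
  by rewrite -(big_mkord xpredT (fun k => g k.+1 - g k)) telescope_sumr.
have heq : t * D - (f (t *: u + x) - f x) =
    - \sum_(k < n) (g k.+1 - g k - t * u 0 k * partial k f x).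
  rewrite sumrB tel gn g0 /D mulr_sumr.
  under [X in _ = - (_ - X)]eq_bigr do rewrite -mulrA.
  by rewrite [RHS]opprB.
have key : `|t * D - (f (t *: u + x) - f x)| <= e * `|t|.
  rewrite heq normrN; apply: le_trans (ler_norm_sum _ _ _) _.
  apply: le_trans (_ : \sum_(k < n) e' * (`|t| * `|u 0 k|) <= _).
    apply: ler_sum => k _.
    rewrite /g PkS scalerDr addrA scalerA -normrM.
    apply: seg_bound => s hs.
    have hb := hball (x + t *: Pk u k + s *: ebasis R k).
    have [] := hb.
      rewrite -ball_normE /ball_ /=.
      have -> : x - (x + t *: Pk u k + s *: ebasis R k) =
          - (t *: Pk u k + s *: ebasis R k).
        by rewrite -addrA opprD addrA subrr sub0r.
      rewrite normrN; apply: (le_lt_trans (@Pk_norm u k t s hs)).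
      apply: le_lt_trans (_ : `|t| * (`|u| + 1) < del).
        by rewrite ler_wpM2l // lerDl.
      by rewrite -ltr_pdivlMr // ltr_wpDl.
    move=> hder hcz; split; first exact: hder k.
    by rewrite distrC; exact: hcz k.
  rewrite -mulr_sumr -mulr_sumr -/S.
  have hS : e' * S <= e.
    by rewrite /e' mulrAC ler_pdivrMr // ler_pM2l // /M lerDl.
  by rewrite mulrCA [e * _]mulrC ler_wpM2l.
have -> : D - t^-1 *: ((f \o shift x) (t *: u) - f x) =
    t^-1 * (t * D - (f (t *: u + x) - f x)).
  by rewrite mulrBr mulKf.
rewrite normrM normfV ler_pdivrMl ?normr_gt0 //.
by rewrite [_ * e]mulrC.
Unshelve. all: by end_near.
Qed.

End Aux.

Section Fin.
Variables (R : realType) (n : nat) (F : 'rV[R]_n -> R).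
Hypothesis hF : finsler_norm F.
Local Open Scope classical_set_scope.
Local Open Scope ring_scope.

Local Notation G := (sqF F).
Local Notation e := (ebasis R).

Lemma Fge0 (x : 'rV[R]_n) : 0 <= F x.
Proof. by case: hF. Qed.

Lemma Fhom l x : 0 < l -> F (l *: x) = l * F x.
Proof. by case: hF => _ [_ [_ [H _]]]; exact: H. Qed.

Lemma Fpos (x : 'rV[R]_n) : x != 0 -> forall y : 'rV[R]_n, y != 0 ->
     0 < \sum_(a < n) \sum_(b < n) fund_tensor F x a b * y 0 a * y 0 b.
Proof. by case: hF => _ [_ [_ [_ H]]]; exact: H. Qed.

Lemma smooth_cont l x : x != 0 -> {for x, continuous (iter_partial l F)}.
Proof.
case: hF => _ [[_ H] _] hx; apply: (H l).1.
by rewrite inE.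
Qed.

Lemma smooth_der l a x : x != 0 -> derivable (iter_partial l F) x (e a).
Proof. by case: hF => _ [[_ H] _] hx; apply: (H l).2. Qed.

Lemma near_nz (x : 'rV[R]_n) : x != 0 -> \forall z \near x, z != 0.
Proof. by case: hF => _ [[Uo _] _] hx; exact: Uo. Qed.

Lemma GE : G = F * F.
Proof. by apply/funext => z; rewrite /sqF expr2. Qed.

Lemma dG (x : 'rV[R]_n) a : x != 0 -> derivable G x (e a).
Proof. by move=> hx; rewrite GE; apply: derivableM; exact: (smooth_der [::] a x hx). Qed.

Lemma pG (x : 'rV[R]_n) a : x != 0 -> partial a G x = 2 * F x * partial a F x.
Proof.
move=> hx; rewrite /partial GE deriveM; try exact: (smooth_der [::] a x hx).
rewrite /=; change (F x * 'D_(e a) F x + F x * 'D_(e a) F x = 2 * F x * 'D_(e a) F x); ring.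
Qed.

Lemma sE (u v : R) : u *: v = u * v.
Proof. by []. Qed.

Lemma near_eq_cont (f g : 'rV[R]_n -> R) x :
  (\forall z \near x, f z = g z) -> {for x, continuous f} -> {for x, continuous g}.
Proof.
move=> fg cf; have ex : f x = g x := nbhs_singleton fg.
suff : g z @[z --> x] --> f x by rewrite ex.
apply: cvg_trans _ cf.
exact: (@near_eq_cvg _ _ (nbhs x) _ f g fg).
Qed.

Lemma pG_near (x : 'rV[R]_n) a : x != 0 ->
  \forall z \near x, 2 * F z * partial a F z = partial a G z.
Proof.
move=> hx; have := near_nz x hx; apply: filterS => z hz.
by rewrite (pG z a hz).
Qed.

Lemma dP2 (x : 'rV[R]_n) a b : x != 0 ->
  derivable (fun z => 2 * F z * partial a F z) x (e b).
Proof.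
move=> hx.
have -> : (fun z => 2 * F z * partial a F z) = cst 2 * F * partial a F by [].
apply: derivableM; last exact: (smooth_der [:: a] b x hx).
apply: derivableM; first exact: derivable_cst.
exact: (smooth_der [::] b x hx).
Qed.

Lemma dpG (x : 'rV[R]_n) a b : x != 0 -> derivable (partial a G) x (e b).
Proof.
move=> hx; exact: (@near_eq_derivable _ _ _ (fun z => 2 * F z * partial a F z)
  (partial a G) x (e b) (pG_near x a hx) (dP2 x a b hx)).
Qed.

Lemma cpG (x : 'rV[R]_n) a : x != 0 -> {for x, continuous (partial a G)}.
Proof.
move=> hx; apply: (near_eq_cont _ _ _ (pG_near x a hx)).
have FF : Filter (nbhs x) by apply: nbhs_filter.
have h1 := @cvgM _ _ (nbhs x) FF (fun=> 2) F 2 (F x) (@cvg_cst _ _ _ (nbhs x) FF) (smooth_cont [::] x hx).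
exact: (@cvgM _ _ (nbhs x) FF _ (partial a F) _ _ h1 (smooth_cont [:: a] x hx)).
Qed.

Lemma ddG_near (x : 'rV[R]_n) a b : x != 0 -> \forall z \near x,
  2 * (F z * partial b (partial a F) z + partial a F z * partial b F z)
  = partial b (partial a G) z.
Proof.
move=> hx; have := near_nz x hx; apply: filterS => z hz.
rewrite /partial -(near_eq_derive _ (pG_near z a hz)).
have -> : (fun z => 2 * F z * 'D_(e a) F z) = cst 2 * F * partial a F by [].
rewrite deriveM; last exact: (smooth_der [:: a] b z hz).
  rewrite deriveM; last exact: (smooth_der [::] b z hz).
    rewrite derive_cst !sE /=; rewrite /partial.
    have -> : (cst 2 * F) z = 2 * F z by [].
    ring.
  exact: derivable_cst.
apply: derivableM; first exact: derivable_cst.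
exact: (smooth_der [::] b z hz).
Qed.

Lemma cddG (x : 'rV[R]_n) a b : x != 0 -> {for x, continuous (partial b (partial a G))}.
Proof.
move=> hx; apply: (near_eq_cont _ _ _ (ddG_near x a b hx)).
have FF : Filter (nbhs x) by apply: nbhs_filter.
have c1 := @cvgM _ _ _ FF _ _ _ _ (smooth_cont [::] x hx) (smooth_cont [:: b; a] x hx).
have c2 := @cvgM _ _ _ FF _ _ _ _ (smooth_cont [:: a] x hx) (smooth_cont [:: b] x hx).
have c3 := @cvgD _ _ _ _ FF _ _ _ _ c1 c2.
exact: (@cvgM _ _ _ FF (fun=> 2) _ _ _ (@cvg_cst _ _ _ _ FF) c3).
Qed.

Lemma LG (x : 'rV[R]_n) : x != 0 -> forall u,
  derivable G x u /\ 'D_u G x = \sum_(a < n) u 0 a * partial a G x.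
Proof.
move=> hx; apply: dir_partials; last by move=> a; exact: cpG.
have := near_nz x hx; apply: filterS => z hz a; exact: dG.
Qed.

Lemma LpG (x : 'rV[R]_n) a : x != 0 -> forall u,
  derivable (partial a G) x u /\
  'D_u (partial a G) x = \sum_(b < n) u 0 b * partial b (partial a G) x.
Proof.
move=> hx; apply: dir_partials; last by move=> b; exact: cddG.
have := near_nz x hx; apply: filterS => z hz b; exact: dpG.
Qed.

Lemma Euler0 (x : 'rV[R]_n) : x != 0 -> 'D_x G x = 2 * G x.
Proof.
move=> hx; rewrite /derive; apply: cvg_lim => //.
have E : \forall h \near 0^', (h + 2) * G x =
    h^-1 *: ((G \o shift x) (h *: x) - G x).
  near=> h.
  have h0 : h != 0 by near: h; exact: nbhs_dnbhs_neq.
  have h1 : `|h| < 1 by near: h; apply: dnbhs0_lt.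
  have hp : 0 < h + 1.
    by move: h1; rewrite ltr_norml => /andP[+ _]; rewrite -subr_gt0 opprK addrC.
  rewrite /= (_ : h *: x + x = (h + 1) *: x); last by rewrite scalerDl scale1r.
  by rewrite /sqF Fhom // sE; field.
apply: cvg_trans (near_eq_cvg E) _.
have c : {for 0, continuous (fun h : R => (h + 2) * G x)}.
  apply: cvgM; last exact: cvg_cst.
  apply: cvgD; [exact: cvg_id | exact: cvg_cst].
have := (continuous_withinNx _ _).1 c; rewrite add0r; exact.
Unshelve. all: by end_near.
Qed.

Lemma Euler1 (x : 'rV[R]_n) : x != 0 -> \sum_(a < n) x 0 a * partial a G x = 2 * G x.
Proof. by move=> hx; have [_ <-] := LG x hx x; exact: Euler0. Qed.

Lemma coord_der (z d : 'rV[R]_n) (a : 'I_n) :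
  is_derive z d (fun y : 'rV[R]_n => y 0 a) (d 0 a).
Proof.
split.
  rewrite /derivable; apply: (is_cvg_near_cst (d 0 a)).
  near=> h.
  have h0 : h != 0 by near: h; exact: nbhs_dnbhs_neq.
  by rewrite /= !mxE addrK sE mulKf.
rewrite /derive; apply: lim_near_cst => //.
near=> h.
have h0 : h != 0 by near: h; exact: nbhs_dnbhs_neq.
by rewrite /= !mxE addrK sE mulKf.
Unshelve. all: by end_near.
Qed.

Lemma Aeq (v : 'rV[R]_n) (b : 'I_n) : v != 0 ->
  \sum_(a < n) v 0 a * partial b (partial a G) v = partial b G v.
Proof.
move=> hv.
pose H := fun z : 'rV[R]_n => \sum_(a < n) z 0 a * partial a G z.
have e1 : 'D_(e b) H v = 2 * partial b G v.
  rewrite (@near_eq_derive _ _ _ H (2 \*o G) v (e b)); last first.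
    by have := near_nz v hv; apply: filterS => z hz; rewrite /H Euler1.
  by rewrite deriveMl //; exact: dG.
have term a : 'D_(e b) (fun z : 'rV[R]_n => z 0 a * partial a G z) v =
    v 0 a * partial b (partial a G) v + partial a G v * (e b 0 a).
  have -> : (fun z : 'rV[R]_n => z 0 a * partial a G z) = (fun y : 'rV[R]_n => y 0 a) * partial a G by [].
  have [cd1 cd2] := coord_der v (e b) a.
  rewrite deriveM //; last exact: dpG.
  by rewrite cd2 !sE.
have HE : H = \sum_(a < n) (fun z : 'rV[R]_n => z 0 a * partial a G z).
  by apply/funext => z; rewrite fct_sumE.
have e2 : 'D_(e b) H v = \sum_(a < n) v 0 a * partial b (partial a G) v + partial b G v.
  rewrite HE derive_sum; last first.
    move=> a; have -> : (fun z : 'rV[R]_n => z 0 a * partial a G z) = (fun y : 'rV[R]_n => y 0 a) * partial a G by [].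
    have [cd1 cd2] := coord_der v (e b) a.
    by apply: derivableM => //; exact: dpG.
  rewrite (eq_bigr _ (fun a _ => term a)) big_split /=; congr (_ + _).
  rewrite (bigD1 b) //= ebasisE eqxx mulr1 big1 ?addr0 // => a ab.
  by rewrite ebasisE (negbTE ab) mulr0.
move: e2; rewrite e1 => h2; lra.
Qed.

Lemma gbarE (v w : 'rV[R]_n) : v != 0 -> gbar F v w = 2^-1 * 'D_w G v.
Proof.
move=> hv; rewrite /gbar (negbTE hv).
have [_ ->] := LG v hv w.
rewrite exchange_big /= mulr_sumr; apply: eq_bigr => b _.
transitivity (2^-1 * (w 0 b * \sum_(a < n) v 0 a * partial b (partial a G) v)).
  rewrite mulr_sumr mulr_sumr; apply: eq_bigr => a _; rewrite /fund_tensor; ring.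
by rewrite Aeq //; ring.
Qed.

Lemma convexK (v d : 'rV[R]_n) : (forall t : R, 0 <= t <= 1 -> v + t *: d != 0) ->
  G v + 'D_d G v <= G (v + d).
Proof.
move=> hseg.
have hv : v != 0.
  by have := hseg 0; rewrite scale0r addr0; apply; rewrite lexx ler01.
pose phi := fun t : R => G (v + t *: d).
pose psi := fun t : R => \sum_(a < n) d 0 a * partial a G (v + t *: d).
have dphi (t : R) : 0 <= t <= 1 -> is_derive t 1 phi (psi t).
  move=> ht; have [d1 d2] := LG _ (hseg t ht) d.
  have := @line_is_derive R n G v d t d1.
  by rewrite d2.
have dpsi (t : R) : 0 <= t <= 1 -> derivable psi t 1 /\ 0 <= 'D_1 psi t.
  move=> ht; have hp := hseg t ht.
  have der a : is_derive t 1 (fun s : R => partial a G (v + s *: d))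
      ('D_d (partial a G) (v + t *: d)).
    exact: (@line_is_derive R n (partial a G) v d t (LpG _ a hp d).1).
  have PE : psi = \sum_(a < n) (d 0 a \*o (fun s : R => partial a G (v + s *: d))).
    by apply/funext => s; rewrite fct_sumE.
  have dera a : derivable (d 0 a \*o (fun s : R => partial a G (v + s *: d))) t 1.
    have [da _] := der a.
    have -> : (d 0 a \*o (fun s : R => partial a G (v + s *: d))) =
      cst (d 0 a) * (fun s : R => partial a G (v + s *: d)) by [].
    by apply: derivableM => //; exact: derivable_cst.
  split; first by rewrite PE; apply: derivable_sum.
  rewrite PE derive_sum //.
  under eq_bigr => a _.
    rewrite deriveMl; last by case: (der a).
    have [_ ->] := der a.
    have [_ ->] := LpG _ a hp d.
  over.
  have Q : \sum_(a < n) d 0 a * (\sum_(b < n) d 0 b * partial b (partial a G) (v + t *: d))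
    = 2 * \sum_(a < n) \sum_(b < n) fund_tensor F (v + t *: d) a b * d 0 a * d 0 b.
    rewrite mulr_sumr; apply: eq_bigr => a _.
    rewrite !mulr_sumr; apply: eq_bigr => b _; rewrite /fund_tensor; by field.
  rewrite Q; apply: mulr_ge0 => //.
  have [->|dn0] := eqVneq d 0.
    by rewrite big1 // => a _; rewrite big1 // => b _; rewrite mxE mulr0 mul0r.
  exact: ltW (Fpos _ hp d dn0).
have psimono (t : R) : 0 <= t <= 1 -> psi 0 <= psi t.
  move=> /andP[t0 t1].
  apply: (@ger0_derive1_ndecr R psi 0 1) => //.
  - move=> s; rewrite in_itv /= => /andP[s0 s1].
    have hs : 0 <= s <= 1 by rewrite !ltW.
    by have [] := dpsi s hs.
  - move=> s; rewrite in_itv /= => /andP[s0 s1].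
    have hs : 0 <= s <= 1 by rewrite !ltW.
    by rewrite derive1E; have [] := dpsi s hs.
  - apply: derivable_within_continuous => s; rewrite in_itv /= => hs.
    by have [] := dpsi s hs.
have [xi hxi E] : exists2 xi, xi \in `[0, 1] & phi 1 - phi 0 = psi xi * (1 - 0).
  apply: MVT_segment; first exact: ler01.
    move=> s; rewrite in_itv /= => /andP[s0 s1]; apply: dphi; by rewrite !ltW.
  apply: derivable_within_continuous => s; rewrite in_itv /= => hs.
  by have [] := dphi s hs.
have p0 : psi 0 = 'D_d G v.
  by have [_ ->] := LG _ hv d; rewrite /psi scale0r addr0.
move: hxi; rewrite in_itv /= => /psimono; rewrite p0 => hle.
move: E; rewrite /phi scale1r scale0r addr0 subr0 mulr1 => E.
lra.
Qed.

Lemma alg_bound (a b D : R) : 0 <= a -> 0 <= b ->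
  (forall l, 0 < l -> l * D <= l ^+ 2 * b ^+ 2 + a ^+ 2) -> D <= 2 * a * b.
Proof.
move=> a0 b0 H.
have [bpos|bnp] := ltrP 0 b.
  have [apos|anp] := ltrP 0 a.
    have q0 : 0 < a / b by rewrite divr_gt0.
    have := H _ q0; set q := a / b => h.
    have qb : q * b = a by rewrite /q divfK // gt_eqF.
    rewrite -exprMn qb in h.
    have e2 : q * (2 * a * b) = 2 * a ^+ 2 by rewrite -qb; ring.
    have : q * (D - 2 * a * b) <= 0 by rewrite mulrBr e2; lra.
    by rewrite pmulr_rle0 // subr_le0.
  have a00 : a = 0 by apply/eqP; rewrite eq_le anp a0.
  rewrite a00 mulr0 mul0r leNgt.
  apply/negP => Dpos.
  have bb : 0 < b ^+ 2 by rewrite exprn_gt0.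
  have q0 : 0 < D / (2 * b ^+ 2) by rewrite divr_gt0 // mulr_gt0.
  have := H _ q0; set q := D / (2 * b ^+ 2) => h.
  have qb : q * (2 * b ^+ 2) = D by rewrite /q divfK // gt_eqF // mulr_gt0.
  rewrite a00 in h; nra.
have b00 : b = 0 by apply/eqP; rewrite eq_le bnp b0.
rewrite b00 mulr0; rewrite leNgt; apply/negP => Dpos.
have q0 : 0 < (a ^+ 2 + 1) / D by rewrite divr_gt0 // ltr_wpDl // sqr_ge0.
have := H _ q0; set q := (a ^+ 2 + 1) / D => h.
have qD : q * D = a ^+ 2 + 1 by rewrite /q divfK // gt_eqF.
rewrite b00 in h; nra.
Qed.

Lemma DB (v w : 'rV[R]_n) : v != 0 -> 'D_w G v <= 2 * F v * F w.
Proof.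
move=> hv.
have lin u : 'D_u G v = \sum_(a < n) u 0 a * partial a G v := (LG v hv u).2.
have eul : 'D_v G v = 2 * G v := Euler0 v hv.
have Gv : G v = F v ^+ 2 by [].
have := Fge0 v; have := Fge0 w => fw fv.
case: (pselect (exists c : R, 0 <= c /\ w = - c *: v)) => [[c [c0 wE]]|nw].
  have : 'D_w G v = - c * 'D_v G v.
    rewrite !lin mulr_sumr; apply: eq_bigr => a _; rewrite wE !mxE; ring.
  rewrite eul Gv => ->; nra.
apply: alg_bound => // l l0.
have hseg : forall t : R, 0 <= t <= 1 -> v + t *: (l *: w - v) != 0.
  move=> t /andP[t0 t1]; apply/negP => /eqP h0; apply: nw.
  have [t00|tn0] := eqVneq t 0.
    by move: h0; rewrite t00 scale0r addr0 => h0; move: hv; rewrite h0 eqxx.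
  have tl0 : t * l != 0 by rewrite mulf_neq0 // gt_eqF.
  exists ((1 - t) / (t * l)); split.
    by rewrite divr_ge0 ?subr_ge0 // mulr_ge0 // ltW.
  apply/rowP => j; rewrite !mxE.
  have hj := congr1 (fun z : 'rV[R]_n => z 0 j) h0; rewrite /= !mxE in hj.
  have wj : w 0 j = ((t - 1) * v 0 j) / (t * l).
    apply: (mulIf tl0); rewrite divfK //.
    by apply/eqP; rewrite -subr_eq0; apply/eqP; rewrite -hj; ring.
  by rewrite wj; field; rewrite gt_eqF.
have K := convexK v (l *: w - v) hseg.
rewrite (addrC v) subrK in K.
have Gl : G (l *: w) = l ^+ 2 * F w ^+ 2 by rewrite /sqF Fhom // exprMn.
have Dl : 'D_(l *: w - v) G v = l * 'D_w G v - 'D_v G v.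
  rewrite !lin mulr_sumr -sumrB; apply: eq_bigr => a _; rewrite !mxE; ring.
rewrite Gl Dl eul Gv in K; lra.
Qed.

End Fin.

Theorem mainTheorem11 (R : realType) (n : nat) (hn : (1 <= n)%N)
  (F : 'rV[R]_n -> R) (hF : finsler_norm F)
  (v0 w0 : R) (v w : 'rV[R]_n) (hv0 : 0 < v0) (hw0 : 0 < w0)
  (hv : 0 < v0 ^+ 2 - F v ^+ 2) (hw : 0 < w0 ^+ 2 - F w ^+ 2) :
  0 <= (v0 * w0 - gbar F v w) ^+ 2 - (v0 ^+ 2 - F v ^+ 2) * (w0 ^+ 2 - F w ^+ 2).
Proof.
have a0 := Fge0 R n F hF v; have b0 := Fge0 R n F hF w.
move: hv hw a0 b0; set a := F v; set b := F w => hv hw a0 b0.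
have va : a < v0 by nra.
have wb : b < w0 by nra.
case: (eqVneq v 0) => [vz|hvn].
  have -> : gbar F v w = 0 by rewrite /gbar vz eqxx.
  have h1 : 0 <= v0 ^+ 2 * b ^+ 2 by rewrite mulr_ge0 // sqr_ge0.
  have h2 : 0 <= a ^+ 2 * (w0 ^+ 2 - b ^+ 2) by rewrite mulr_ge0 // ?sqr_ge0 // ltW.
  have -> : (v0 * w0 - 0) ^+ 2 - (v0 ^+ 2 - a ^+ 2) * (w0 ^+ 2 - b ^+ 2) =
    v0 ^+ 2 * b ^+ 2 + a ^+ 2 * (w0 ^+ 2 - b ^+ 2) by ring.
  by rewrite addr_ge0.
rewrite (gbarE R n F hF v w hvn).
have hD := DB R n F hF v w hvn.
set g := 2^-1 * _.
rewrite -/a -/b in hD.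
have hg : g <= a * b by rewrite /g; lra.
have e1 : a * b <= v0 * b by rewrite ler_wpM2r // ltW.
have e2 : v0 * b <= v0 * w0 by rewrite ler_wpM2l // ltW.
have hab : 0 <= v0 * w0 - a * b by lra.
have h1 : v0 * w0 - a * b <= v0 * w0 - g by lra.
have h2 : (v0 * w0 - a * b) ^+ 2 <= (v0 * w0 - g) ^+ 2.
  by rewrite lerXn2r // ?nnegrE // (le_trans hab h1).
have -> : (v0 * w0 - g) ^+ 2 - (v0 ^+ 2 - a ^+ 2) * (w0 ^+ 2 - b ^+ 2) =
   ((v0 * w0 - g) ^+ 2 - (v0 * w0 - a * b) ^+ 2) + (v0 * b - a * w0) ^+ 2 by ring.
by rewrite addr_ge0 ?sqr_ge0 // subr_ge0.
Qed.
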